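(* Let $c,k$ be positive integers and let $Z$ be a multigraph in which every edge has multiplicity less than $c$. Let $\{A,B\}$ be a partition of $V(Z)$ such that each vertex of $A$ has edge-degree at least $k$ in $Z$, $B$ is an independent set of $Z$, and each vertex of $B$ has at least $2$ distinct neighbors in $Z$. Then $Z$ has a cluster collection $\mathcal{C}$ such that each vertex of $A$ belongs to exactly one cluster of $\mathcal{C}$, no cluster of $\mathcal{C}$ has more than $k+1$ vertices, and each vertex of $Z/\mathcal{C}$ has edge-degree at least $k/c$.
   Context: Graphs are finite multigraphs without loops; when contracting edges, multiplicities of parallel edges created are summed and loops are deleted. The edge-degree of a vertex is the number of edges (with multiplicity) incident to it. A cluster collection of $Z$ is a nonempty collection $\mathcal{C}$ of pairwise disjoint nonempty vertex sets each inducing a connected subgraph of $Z$; $Z/\mathcal{C}$ is the multigraph obtained from $Z[\bigcup\mathcal{C}]$ by contracting all edges inside each cluster of $\mathcal{C}$. *)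

(* Defs.v *)
(* A finite loopless multigraph on a finType V is given by a
   symmetric multiplicity function m : V -> V -> nat with m x x = 0. *)
From mathcomp Require Import all_boot all_order all_algebra.
Set Implicit Arguments. Unset Strict Implicit. Unset Printing Implicit Defensive.
Import Order.TTheory GRing.Theory Num.Theory.

Section MG.
Variable V : finType.
Variable m : V -> V -> nat.

Definition is_multigraph : Prop := (forall x y, m x y = m y x) /\ (forall x, m x x = 0).

Definition edeg (x : V) : nat := \sum_(y : V) m x y.

Definition nbrs (x : V) : {set V} := [set y | 0 < m x y].

Definition independent (B : {set V}) : Prop :=
  forall x y, x \in B -> y \in B -> m x y = 0.

Definition induced_connected (S : {set V}) : Prop :=
  forall x y, x \in S -> y \in S ->
    connect (fun u v => [&& u \in S, v \in S & 0 < m u v]) x y.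

Definition cluster_collection (C : {set {set V}}) : Prop :=
  [/\ C != set0,
      (forall X, X \in C -> X != set0),
      (forall X Y, X \in C -> Y \in C -> X != Y -> [disjoint X & Y]) &
      (forall X, X \in C -> induced_connected X)].

(* multiplicity of the edge between clusters X and Y in Z/C
   (only used for X <> Y: edges inside a cluster become loops and are deleted) *)
Definition cmult (X Y : {set V}) : nat := \sum_(x in X) \sum_(y in Y) m x y.

Definition quot_edeg (C : {set {set V}}) (X : {set V}) : nat :=
  \sum_(Y in C | Y != X) cmult X Y.

End MG.

(* Main.v *)
Require Import Defs.
From mathcomp Require Import all_boot all_order all_algebra.
Import Order.TTheory GRing.Theory Num.Theory.

Lemma ex_subset_card (V : finType) (N : {set V}) (n : nat) :
  n <= #|N| -> exists T : {set V}, T \subset N /\ #|T| = n.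
Proof.
elim: n => [|n IH] H; first by exists set0; rewrite sub0set cards0.
have [T [sTN cT]] := IH (ltnW H).
have : N :\: T != set0.
  rewrite -card_gt0; have E := cardsID T N.
  by rewrite (setIidPr sTN) cT in E; move: H; rewrite -E -addn1 leq_add2l.
case/set0Pn => x; rewrite inE => /andP [xT xN].
exists (x |: T); rewrite subUset sub1set xN sTN cardsU1 xT cT; split=> //.
Qed.

Lemma sum_ge_card (V : finType) (D : {set V}) (f : V -> nat) :
  #|[set y in D | 0 < f y]| <= \sum_(y in D) f y.
Proof.
rewrite -sum1_card.
rewrite [X in _ <= X](bigID (fun y => 0 < f y)) /=.
apply: leq_trans (leq_addr _ _).
rewrite (eq_bigl (fun y => (y \in D) && (0 < f y))); last by move=> y; rewrite inE.
by apply: leq_sum => y /andP [].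
Qed.
Local Open Scope ring_scope.

Theorem lemma1 (c k : nat) (V : finType) (m : V -> V -> nat) (A : {set V}) :
  (0 < c)%N -> (0 < k)%N ->
  (0 < #|V|)%N ->
  is_multigraph m ->
  (forall x y, (m x y < c)%N) ->
  (forall a, a \in A -> (k <= edeg m a)%N) ->
  independent m (~: A) ->
  (forall b, b \in ~: A -> (2 <= #|nbrs m b|)%N) ->
  exists C : {set {set V}},
    [/\ cluster_collection m C,
        (forall a, a \in A -> #|[set X in C | a \in X]| = 1%N),
        (forall X, X \in C -> (#|X| <= k.+1)%N) &
        (forall X, X \in C -> (k%:R / c%:R : rat) <= (quot_edeg m C X)%:R)].
Proof.
move=> c0 k0 V0 [msym m0] mc degA indB nbB.
have [T HT] : exists T : V -> {set V}, forall a,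
    T a \subset (nbrs m a :\: A) /\ #|T a| = minn #|nbrs m a :\: A| k.
  have H a : exists Ta : {set V}, Ta \subset (nbrs m a :\: A) /\ #|Ta| = minn #|nbrs m a :\: A| k.
    by apply: ex_subset_card; exact: geq_minl.
  exact: (fin_all_exists H).
pose owner b := [pick a | (a \in A) && (b \in T a)].
pose S a := [set b | owner b == Some a].
pose X a := a |: S a.
have inN a y : (y \in nbrs m a) = (0 < m a y)%N by rewrite inE.
have SP a b : b \in S a -> [/\ a \in A, b \in T a, b \notin A & (0 < m a b)%N].
  rewrite inE /owner; case: pickP => [a' /andP [a'A bT] /eqP [<-] | _] //.
  have [/subsetP sT _] := HT a'; have := sT _ bT; rewrite !inE => /andP [-> ].
  by rewrite -inN.
have XA a x : x \in X a -> x \in A -> x = a.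
  rewrite in_setU1 => /orP [/eqP -> //| /SP [_ _ nA _] xA].
  by rewrite xA in nA.
have Xinj a a' : a \in A -> X a = X a' -> a = a'.
  by move=> aA E; apply: (XA a' a) => //; rewrite -E in_setU1 eqxx.
have Xdisj a a' : a \in A -> a' \in A -> a != a' -> [disjoint X a & X a'].
  move=> aA a'A ne; rewrite -setI_eq0; apply/eqP/setP => x; rewrite in_setI !in_setU1 in_set0.
  apply/negbTE; apply/negP => /andP [/orP [/eqP xa | xS] /orP [/eqP xa' | xS']].
  - by move: ne; rewrite -xa xa' eqxx.
  - by case: (SP _ _ xS') => _ _; rewrite xa aA.
  - by case: (SP _ _ xS) => _ _; rewrite xa' a'A.
  - by move: xS xS'; rewrite !inE => /eqP -> /eqP [] /eqP; rewrite (negbTE ne).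
pose C := X @: A.
have ownP y a : a \in A -> y \in T a -> exists a', a' \in A /\ y \in S a'.
  move=> aA yT; case E: (owner y) => [a'|].
    exists a'; split; last by rewrite inE E.
    by move: E; rewrite /owner; case: pickP => // x /andP [xA _] [<-].
  by move: E; rewrite /owner; case: pickP => // /(_ a); rewrite aA yT.
have aXa a : a \in X a by rewrite in_setU1 eqxx.
have inD a a' y : a \in A -> a' \in A -> a' != a -> y \in X a' -> y \in cover (C :\ X a).
  move=> aA a'A ne yX; apply/bigcupP; exists (X a') => //.
  rewrite in_setD1 imset_f // andbT; apply: contraNneq ne => E.
  by apply/eqP; exact: Xinj a'A E.
have nbA b y : b \notin A -> (0 < m b y)%N -> y \in A.
  move=> bA my; apply/negPn/negP => yA.
  by move: my; rewrite indB // inE.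
have [a0 a0A] : exists a, a \in A.
  case/card_gt0P: V0 => v _; case vA: (v \in A); first by exists v.
  have : (0 < #|nbrs m v|)%N by apply: leq_trans (nbB v _); rewrite // inE vA.
  case/card_gt0P => y; rewrite inN => my; exists y; apply: (nbA v) => //.
  by rewrite vA.
have aS a : a \in A -> a \notin S a.
  by move=> aA; apply/negP => /SP [_ _ nA _]; rewrite aA in nA.
have XC a : a \in A -> X a \in C by move=> aA; exact: imset_f.
exists C; split.
- split.
  + by apply/set0Pn; exists (X a0); exact: XC.
  + by move=> Y /imsetP [a aA ->]; apply/set0Pn; exists a.
  + move=> Y1 Y2 /imsetP [a1 a1A ->] /imsetP [a2 a2A ->] ne.
    by apply: Xdisj => //; apply: contraNneq ne => ->.
  + move=> Y /imsetP [a aA ->].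
    have toA u : u \in X a -> connect (fun u v => [&& u \in X a, v \in X a & (0 < m u v)%N]) u a
        /\ connect (fun u v => [&& u \in X a, v \in X a & (0 < m u v)%N]) a u.
      move=> uX; have := uX; rewrite in_setU1 => /orP [/eqP -> | uS].
        by split; apply: connect0.
      have [_ _ _ mau] := SP _ _ uS.
      split; apply: connect1; rewrite /= uX aXa //= msym //.
    move=> x y xX yX; apply: connect_trans (proj1 (toA x xX)) (proj2 (toA y yX)).
- move=> a aA; rewrite (_ : [set Y in C | a \in Y] = [set X a]) ?cards1 //.
  apply/setP => Y; rewrite !inE; apply/andP/eqP => [[/imsetP [a' a'A ->] aX] | ->].
    by rewrite (XA _ _ aX aA).
  by split; [exact: XC | exact: aXa].
- move=> Y /imsetP [a aA ->]; rewrite cardsU1.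
  have [sT cT] := HT a.
  rewrite -add1n; apply: leq_add; first by case: (a \in S a).
  apply: leq_trans (geq_minr #|nbrs m a :\: A| k); rewrite -cT.
  apply: subset_leq_card; apply/subsetP => b /SP [] //.
- move=> Y /imsetP [a aA ->].
  rewrite ler_pdivrMr ?ltr0n // -natrM ler_nat.
  pose D := cover (C :\ X a).
  have tri : trivIset (C :\ X a).
    apply/trivIsetP => Y1 Y2; rewrite !in_setD1.
    move=> /andP [_ /imsetP [a1 a1A ->]] /andP [_ /imsetP [a2 a2A ->]] ne.
    by apply: Xdisj => //; apply: contraNneq ne => ->.
  have qE : quot_edeg m C (X a) = (\sum_(x in X a) \sum_(y in D) m x y)%N.
    rewrite /quot_edeg /cmult.
    rewrite (eq_bigl (fun Y => Y \in C :\ X a)); last by move=> Z; rewrite in_setD1 andbC.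
    rewrite exchange_big /=; apply: eq_bigr => x _.
    by rewrite /D big_trivIset.
  rewrite qE big_setU1 /=; last exact: aS.
  have B1 := sum_ge_card _ D (m a).
  have B2 : (#|S a| <= \sum_(b in S a) \sum_(y in D) m b y)%N.
    rewrite -sum1_card; apply: leq_sum => b bS.
    have [_ bT bA mab] := SP _ _ bS.
    have : (0 < #|nbrs m b :\ a|)%N.
      have := nbB b; rewrite inE bA => /(_ isT).
      rewrite (cardsD1 a (nbrs m b)) => h.
      case: (a \in nbrs m b) h => /= h; first by rewrite add1n ltnS in h.
      by rewrite add0n in h; exact: ltnW h.
    case/card_gt0P => y; rewrite in_setD1 inN => /andP [ya mby].
    have yA := nbA b y bA mby.
    have yD : y \in D by apply: (inD a y y) => //.
    by rewrite (bigD1 y) //=; apply: leq_trans mby (leq_addr _ _).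
  pose NA := nbrs m a :&: A.
  have [sT cT] := HT a.
  have sub : NA :|: T a \subset [set y in D | (0 < m a y)%N] :|: S a.
    apply/subsetP => y; rewrite !inE => /orP [/andP [may yA] | yT].
      have ya : y != a by apply: contraTneq may => ->; rewrite m0.
      by rewrite (inD a y y) // may.
    have := subsetP sT y yT; rewrite !inE => /andP [yA may].
    case yS: (owner y == Some a); first by rewrite orbT.
    have [a' [a'A ya']] := ownP y a aA yT.
    have ne : a' != a by apply: contraFneq yS => E; move: ya'; rewrite E inE.
    by rewrite (inD a a' y) //= ?may // in_setU1 ya' orbT.
  have dis : NA :&: T a = set0.
    apply/setP => y; rewrite !inE; apply/negbTE; apply/negP => /andP [/andP [_ yA] yT].
    by have := subsetP sT y yT; rewrite !inE yA.
  have c1 := cardsUI NA (T a); rewrite dis cards0 addn0 in c1.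
  have c2 := (leq_card_setU [set y in D | (0 < m a y)%N] (S a)).1.
  have c3 := subset_leq_card sub.
  have key : (k <= (#|NA| + #|T a|) * c)%N.
    rewrite cT; have cID := cardsID A (nbrs m a).
    case: (leqP #|nbrs m a :\: A| k) => hk.
      rewrite /NA cID.
      apply: leq_trans (degA a aA) _.
      rewrite /edeg (bigID (fun y => y \in nbrs m a)) /=.
      rewrite [X in (_ + X)%N]big1 ?addn0; last first.
        by move=> y; rewrite inN -eqn0Ngt => /eqP.
      rewrite -sum_nat_const; apply: leq_sum => y _; exact: ltnW.
    idtac.
    apply: leq_trans (leq_pmulr k c0) _; by rewrite leq_mul2r leq_addl orbT.
  apply: leq_trans key _; apply: leq_mul => //.
  rewrite -c1; apply: leq_trans c3 _; apply: leq_trans c2 _.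
  by apply: leq_add.
Qed.
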